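(* Let $S$ be a finite-dimensional quantum system, let $\rho_0$ be a density matrix on $S$, and let $\Phi$ be a completely positive trace-preserving (CPTP) linear map on the operators of $S$ (equivalently, $\Phi(X)=\operatorname{Tr}_A[U^{SA}(X\otimes\rho^A_0)(U^{SA})^\dagger]$ for some ancilla $A$, ancilla state $\rho^A_0$ and unitary $U^{SA}$), with trace-dual $\Phi^\dagger$. Let $H_0,H_\tau$ be Hermitian operators on $S$ (initial and final Hamiltonians), $\beta>0$, and for $t\in\{0,\tau\}$ let $F_t=-\beta^{-1}\ln\operatorname{Tr}e^{-\beta H_t}$ and $\Gamma_t=\exp[\beta(F_t-H_t)]$. Put $\Delta F=F_\tau-F_0$ and $\Delta E=\operatorname{Tr}[\Phi(\rho_0)H_\tau]-\operatorname{Tr}[\rho_0H_0]$. Define the operator $L:=\ln[\Phi^\dagger(\Gamma_\tau)]-\Phi^\dagger(\ln\Gamma_\tau)$. Then $L\ge 0$ and $$\beta(\Delta E-\Delta F)+D(\rho_0\|\Gamma_0)=D(\rho_0\|\Phi^\dagger(\Gamma_\tau))+\operatorname{Tr}[\rho_0L]\ \ge\ D(\rho_0\|\Phi^\dagger(\Gamma_\tau)).$$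
   Context: The trace-dual $\Phi^\dagger$ is the linear map with $\operatorname{Tr}[\Phi(X)Y]=\operatorname{Tr}[X\Phi^\dagger(Y)]$ for all operators $X,Y$. For positive semidefinite $X\neq0$ and $Y$, $D(X\|Y):=\operatorname{Tr}[X]^{-1}\operatorname{Tr}[X\ln X-X\ln Y]$ if $\operatorname{supp}X\subseteq\operatorname{supp}Y$, and $+\infty$ otherwise (an extension of Umegaki's relative entropy; it may be negative when $\operatorname{Tr}Y\neq1$). Logarithms of positive operators are taken on their support. *)

(* Defs.v *)
From HB Require Import structures.
From mathcomp Require Import all_boot all_order all_algebra.
From mathcomp Require Import sesquilinear spectral.
From mathcomp Require Import complex.
From mathcomp Require Import all_classical all_reals.
From mathcomp Require Import ereal sequences.
From mathcomp.analysis Require Import exp.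
Set Implicit Arguments.
Unset Strict Implicit.
Unset Printing Implicit Defensive.
Import Order.TTheory GRing.Theory Num.Theory.
Local Open Scope ring_scope.
Local Open Scope complex_scope.

Section QDefs.
Variable R : realType.
Local Notation C := R[i].

Definition adj {m n} (A : 'M[C]_(m, n)) : 'M[C]_(n, m) := map_mx conjc (A ^T).

Definition is_herm {n} (A : 'M[C]_n) : Prop := adj A = A.

(* positive semidefinite: Hermitian and <v, A v> >= 0 for all vectors v
   (v is a row vector, so <v,Av> is  v A v^dagger). *)
Definition psd {n} (A : 'M[C]_n) : Prop :=
  is_herm A /\ forall v : 'rV[C]_n, 0 <= (v *m A *m adj v) 0 0.

Definition density {n} (A : 'M[C]_n) : Prop := psd A /\ \tr A = 1.

(* Functional calculus for Hermitian (more generally normal) matrices via the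
   spectral decomposition A = P^-1 diag(d) P of mathcomp's spectral.v:
   f(A) := P^-1 diag(f(complex.Re d_i)) P. *)
Definition mxfun {n} (f : R -> R) (A : 'M[C]_n) : 'M[C]_n :=
  invmx (spectralmx A) *m
    diag_mx (map_mx (fun z : C => (f (complex.Re z))%:C) (spectral_diag A))
  *m spectralmx A.

Definition mxexp {n} (A : 'M[C]_n) : 'M[C]_n := mxfun (@expR R) A.

(* matrix logarithm of a positive semidefinite matrix, taken on its support
   (eigenvalue 0 is mapped to 0) *)
Definition mxlog {n} (A : 'M[C]_n) : 'M[C]_n :=
  mxfun (fun x => if 0 < x then ln x else 0) A.

(* support inclusion supp X ⊆ supp Y, where supp = range (column space);
   column spaces are the row spaces of the transposes. *)
Definition supp_sub {n} (X Y : 'M[C]_n) : bool := (X^T <= Y^T)%MS.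

Definition relent {n} (X Y : 'M[C]_n) : \bar R :=
  if supp_sub X Y then
    ((complex.Re (\tr (X *m mxlog X - X *m mxlog Y))) / complex.Re (\tr X))%:E
  else +oo%E.

(* complete positivity, written as positivity of id_k (x) Phi for every k:
   a k x k block matrix (B i j)_{i,j} with n x n blocks is PSD iff
   it is block-Hermitian and sum_{i,j} v_i B_ij v_j^dagger >= 0 for all
   block row vectors (v_i). *)
Definition block_psd {n k} (B : 'I_k -> 'I_k -> 'M[C]_n) : Prop :=
  (forall i j, adj (B i j) = B j i) /\
  forall v : 'I_k -> 'rV[C]_n,
    0 <= (\sum_(i < k) \sum_(j < k) (v i *m B i j *m adj (v j)) 0 0).

Definition completely_positive {n} (Phi : 'M[C]_n -> 'M[C]_n) : Prop :=
  forall (k : nat) (B : 'I_k -> 'I_k -> 'M[C]_n),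
    block_psd B -> block_psd (fun i j => Phi (B i j)).

Definition trace_preserving {n} (Phi : 'M[C]_n -> 'M[C]_n) : Prop :=
  forall X, \tr (Phi X) = \tr X.

Definition trace_dual {n} (Phi Phid : 'M[C]_n -> 'M[C]_n) : Prop :=
  forall X Y, \tr (Phi X *m Y) = \tr (X *m Phid Y).

Definition free_energy {n} (beta : R) (H : 'M[C]_n) : R :=
  - beta^-1 * ln (complex.Re (\tr (mxexp (- (beta%:C) *: H)))).

Definition gibbs {n} (beta : R) (H : 'M[C]_n) : 'M[C]_n :=
  mxexp ((beta%:C) *: ((free_energy beta H)%:C%:M - H)).

End QDefs.

(* Main.v *)
Require Import Defs.
From HB Require Import structures.
From mathcomp Require Import all_boot all_order all_algebra.
From mathcomp Require Import sesquilinear spectral.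
From mathcomp Require Import complex.
From mathcomp Require Import all_classical all_reals.
From mathcomp Require Import ereal sequences.
From mathcomp.analysis Require Import exp.
From mathcomp Require Import ring lra.
Import Order.TTheory GRing.Theory Num.Theory.
Set Implicit Arguments.
Unset Strict Implicit.
Unset Printing Implicit Defensive.
Local Open Scope ring_scope.
Local Open Scope complex_scope.
Local Open Scope sesquilinear_scope.
Section RealPart.
Variable R : realType.

Lemma ln_sub_le (a b : R) : 0 < a -> 0 < b -> ln b - ln a <= (b - a) / a.
Proof.
move=> a0 b0.
have e : ln b - ln a = ln (b / a) by rewrite ln_div // posrE.
rewrite e.
have h : -1 < b / a - 1 by have := divr_gt0 b0 a0; lra.
have := le_ln1Dx h; rewrite addrC subrK.
have -> : b / a - 1 = (b - a) / a by field; rewrite gt_eqF.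
done.
Qed.

Lemma ln_sub_ge (a b : R) : 0 < a -> 0 < b -> (b - a) / b <= ln b - ln a.
Proof.
move=> a0 b0; have := ln_sub_le b0 a0.
have -> : (a - b) / b = - ((b - a) / b) by rewrite -mulNr opprB.
by rewrite -opprB lerN2.
Qed.

Definition hs (s x : R) := (x - 1) / (1 - s + s * x).

Lemma den_gt0 (s x : R) : 0 <= s <= 1 -> 0 < x -> 0 < 1 - s + s * x.
Proof.
move=> /andP[s0 s1] x0.
have [->|sn1] := eqVneq s 1; first by rewrite subrr add0r mul1r.
have : s < 1 by rewrite lt_neqAle sn1 s1.
move=> lt1; have : 0 <= s * x by rewrite mulr_ge0 // ltW.
lra.
Qed.


Definition RN (N : nat) (x : R) :=
  \sum_(0 <= j < N) hs (j.+1%:R / N%:R) x / N%:R.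

Lemma RN_bounds (N : nat) (x : R) : (0 < N)%N -> 0 < x ->
  RN N x <= ln x <= RN N x + (x - 1) ^+ 2 / (x * N%:R).
Proof.
move=> N0 x0.
have Nr : 0 < N%:R :> R by rewrite ltr0n.
pose t (j : nat) : R := j%:R / N%:R.
pose b (j : nat) : R := 1 - t j + t j * x.
have bpos : forall j, (j <= N)%N -> 0 < b j.
  move=> j jN; apply: den_gt0 => //; apply/andP; split.
    by rewrite divr_ge0 // ltW.
  by rewrite ler_pdivrMr // mul1r ler_nat.
have bd : forall j, b j.+1 - b j = (x - 1) / N%:R.
  by move=> j; rewrite /b /t -natr1; field; rewrite gt_eqF.
have lnx : ln x = \sum_(0 <= j < N) (ln (b j.+1) - ln (b j)).
  rewrite telescope_sumr // /b /t mul0r subr0 mul0r addr0 divff ?gt_eqF //.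
  by rewrite subrr add0r mul1r ln1 subr0.
have lo : forall j, (j < N)%N -> hs (j.+1%:R / N%:R) x / N%:R <= ln (b j.+1) - ln (b j).
  move=> k jN; apply: le_trans (ln_sub_ge (bpos _ (ltnW jN)) (bpos _ jN)).
  rewrite bd /hs /b /t; rewrite le_eqVlt.
  apply/orP; left; apply/eqP.
  field; rewrite !gt_eqF //.
  have h1 : k%:R + 1 <= N%:R :> R by rewrite natr1 ler_nat.
  have hk : 0 <= k%:R :> R by rewrite ler0n.
  have h2 : 0 < (1 + k%:R) * x by apply: mulr_gt0 => //; lra.
  lra.
have up : forall j, (j < N)%N -> ln (b j.+1) - ln (b j) <= hs (j%:R / N%:R) x / N%:R.
  move=> k jN; apply: le_trans (ln_sub_le (bpos _ (ltnW jN)) (bpos _ jN)) _.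
  rewrite bd /hs /b /t; rewrite le_eqVlt.
  apply/orP; left; apply/eqP.
  field; rewrite !gt_eqF //.
  have h1 : k%:R + 1 <= N%:R :> R by rewrite natr1 ler_nat.
  have hk : 0 <= k%:R :> R by rewrite ler0n.
  have h2 : 0 <= k%:R * x by apply: mulr_ge0 => //; lra.
  lra.
apply/andP; split.
  rewrite lnx /RN big_nat_cond [X in _ <= X]big_nat_cond.
  by apply: ler_sum => j /andP[/andP[_ jN] _]; apply: lo.
apply: (le_trans (y := \sum_(0 <= j < N) hs (j%:R / N%:R) x / N%:R)).
  rewrite lnx big_nat_cond [X in _ <= X]big_nat_cond.
  by apply: ler_sum => j /andP[/andP[_ jN] _]; apply: up.
pose f (j : nat) := hs (j%:R / N%:R) x / N%:R.
have tel := telescope_sumr f (leq0n N).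
have -> : \sum_(0 <= j < N) hs (j%:R / N%:R) x / N%:R =
   RN N x - (f N - f 0%N).
  by rewrite -tel /RN -sumrB; apply: eq_bigr => j _; rewrite /f opprB addrC subrK.
rewrite /f /hs mul0r subr0 mul0r addr0 divff ?gt_eqF // subrr add0r mul1r.
rewrite le_eqVlt; apply/orP; left; apply/eqP.
field; rewrite !gt_eqF //.
Qed.


Lemma sum_hs (J : finType) (s : R) (c y : J -> R) : 0 < s <= 1 -> (forall j, 0 < y j) ->
  \sum_j c j * hs s (y j) = s^-1 * \sum_j c j - s^-1 * \sum_j c j / (1 - s + s * y j).
Proof.
move=> /andP[s0 s1] yp.
rewrite !mulr_sumr -sumrB; apply: eq_bigr => j _.
have D0 : 0 < 1 - s + s * y j by apply: den_gt0 => //; rewrite ltW.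
rewrite /hs; field; rewrite !gt_eqF //.
Qed.

Lemma stepB (I K : finType) (w m : I -> R) (q lam : K -> R) (s : R) :
  (forall i, 0 < m i) -> (forall k, 0 < lam k) ->
  \sum_i w i = \sum_k q k ->
  0 < s <= 1 ->
  \sum_i w i / (1 - s + s * m i) <= \sum_k q k / (1 - s + s * lam k) ->
  \sum_k q k * hs s (lam k) <= \sum_i w i * hs s (m i).
Proof.
move=> mp lp eS sI h.
rewrite !sum_hs // eS lerD2l lerN2; apply: ler_wpM2l => //.
by case/andP: sI => s0 _; rewrite invr_ge0 ltW.
Qed.

Lemma sum_RN (J : finType) (N : nat) (c y : J -> R) :
  \sum_j c j * RN N (y j) =
  \sum_(0 <= k < N) (\sum_j c j * hs (k.+1%:R / N%:R) (y j)) / N%:R.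
Proof.
rewrite /RN; under eq_bigr do rewrite mulr_sumr.
rewrite exchange_big; apply: eq_bigr => k _; rewrite mulr_suml.
by apply: eq_bigr => j _; rewrite mulrA.
Qed.

Lemma jensen_log (I K : finType) (w m : I -> R) (q lam : K -> R) :
  (forall i, 0 <= w i) -> (forall i, 0 < m i) ->
  (forall k, 0 <= q k) -> (forall k, 0 < lam k) ->
  \sum_i w i = \sum_k q k ->
  (forall s, 0 < s <= 1 ->
     \sum_i w i / (1 - s + s * m i) <= \sum_k q k / (1 - s + s * lam k)) ->
  \sum_k q k * ln (lam k) <= \sum_i w i * ln (m i).
Proof.
move=> wp mp qp lp eS hR.
pose Kc := \sum_k q k * ((lam k - 1) ^+ 2 / lam k).
have Kc0 : 0 <= Kc.
  apply: sumr_ge0 => k _; apply: mulr_ge0 => //.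
  by apply: divr_ge0; [apply: sqr_ge0 | apply: ltW].
have hN : forall N : nat, (0 < N)%N ->
    \sum_k q k * ln (lam k) - Kc / N%:R <= \sum_i w i * ln (m i).
  move=> N N0.
  have Nr : 0 < N%:R :> R by rewrite ltr0n.
  apply: (le_trans (y := \sum_k q k * RN N (lam k))).
    rewrite /Kc mulr_suml -sumrB; apply: ler_sum => k _.
    have := RN_bounds N0 (lp k) => /andP[_ h2].
    have -> : q k * ln (lam k) - q k * ((lam k - 1) ^+ 2 / lam k) / N%:R =
       q k * (ln (lam k) - (lam k - 1) ^+ 2 / (lam k * N%:R)).
      by field; rewrite !gt_eqF.
    apply: ler_wpM2l => //; rewrite lerBlDr; exact: h2.
  apply: (le_trans (y := \sum_i w i * RN N (m i))); last first.
    apply: ler_sum => i _; apply: ler_wpM2l => //.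
    by have := RN_bounds N0 (mp i) => /andP[h1 _].
  rewrite !sum_RN big_nat_cond [X in _ <= X]big_nat_cond.
  apply: ler_sum => k /andP[/andP[_ kN] _].
  apply: ler_wpM2r; first by rewrite invr_ge0 ltW.
  have sI : 0 < (k.+1%:R / N%:R : R) <= 1.
    apply/andP; split; first by rewrite divr_gt0 // ltr0n.
    by rewrite ler_pdivrMr // mul1r ler_nat.
  by apply: stepB => //; apply: hR.
rewrite leNgt; apply/negP => hlt.
set d := \sum_k q k * ln (lam k) - \sum_i w i * ln (m i).
have d0 : 0 < d by rewrite /d subr_gt0.
pose N := (Num.Def.trunc (Kc / d)).+1.
have hN' := hN N isT.
have : Kc / d < N%:R by apply: truncnS_gt.
rewrite ltr_pdivrMr // => hK.
have Nr : 0 < N%:R :> R by rewrite ltr0n.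
have : Kc / N%:R < d by rewrite ltr_pdivrMr // mulrC.
rewrite /d in hK *; lra.
Qed.

End RealPart.
Local Opaque spectralmx spectral_diag.
Section S.
Variable R : realType.
Local Notation C := R[i].

Lemma lec_real (x y : R) : (x%:C <= y%:C) = (x <= y).
Proof. by rewrite lecE /= eqxx. Qed.

Lemma ge0_real (z : C) : 0 <= z -> z = (complex.Re z)%:C /\ 0 <= complex.Re z.
Proof. by case: z => a b; rewrite lecE /= => /andP[/eqP -> ->]. Qed.

Lemma Re_real (x : R) : complex.Re x%:C = x. Proof. by []. Qed.

Lemma ReD (z w : C) : complex.Re (z + w) = complex.Re z + complex.Re w.
Proof. by case: z; case: w. Qed.
Lemma ReN (z : C) : complex.Re (- z) = - complex.Re z.
Proof. by case: z. Qed.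
Lemma ReB (z w : C) : complex.Re (z - w) = complex.Re z - complex.Re w.
Proof. by rewrite ReD ReN. Qed.
Lemma ReMr (a : R) (z : C) : complex.Re (a%:C * z) = a * complex.Re z.
Proof. case: z => x y /=; by rewrite mul0r subr0. Qed.

Lemma conj_real (x : R) : x%:C^* = x%:C. Proof. exact: conjc_real. Qed.
Lemma conjCr (x : R) : ((x%:C)^*)%R = x%:C. Proof. exact: conjc_real. Qed.

Definition dmx n (g : 'I_n -> R) : 'M[C]_n := diag_mx (\row_i (g i)%:C).

Lemma dmxM n (g h : 'I_n -> R) : dmx g *m dmx h = dmx (fun i => g i * h i).
Proof. by rewrite mulmx_diag; congr diag_mx; apply/rowP => j; rewrite !mxE rmorphM. Qed.

Lemma dmx_adj n (g : 'I_n -> R) : (dmx g)^t* = dmx g.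
Proof.
rewrite tr_diag_mx; apply/matrixP => i j; rewrite !mxE.
by case: (i == j); rewrite ?mulr1n ?mulr0n ?conjC0 //; exact: conjc_real.
Qed.

Lemma dmx1 n : dmx (fun _ : 'I_n => 1) = 1%:M.
Proof. by apply/matrixP => i j; rewrite !mxE. Qed.

Lemma unitaryK n (U : 'M[C]_n) : U \is unitarymx -> U *m U^t* = 1%:M /\ U^t* *m U = 1%:M.
Proof.
move=> Uu; split; first exact/unitarymxP.
by rewrite -invmx_unitary // mulVmx // unitarymx_unit.
Qed.

Lemma adj_adjE n m (A : 'M[C]_(n,m)) : adj A = A^t*. Proof. by []. Qed.

Lemma herm_normal n (A : 'M[C]_n) : adj A = A -> A \is normalmx.
Proof. by move=> h; apply/normalmxP; rewrite -adj_adjE h. Qed.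

Definition spec n (A : 'M[C]_n) (i : 'I_n) : R := complex.Re (spectral_diag A 0 i).

Lemma herm_decomp n (A : 'M[C]_n) : adj A = A ->
  A = (spectralmx A)^t* *m dmx (spec A) *m spectralmx A.
Proof.
move=> h.
have hr : spectral_diag A \is a realmx.
  apply: hermitian_spectral_diag_real; apply/is_hermitianmxP.
  by rewrite expr0 scale1r -adj_adjE h.
rewrite -invmx_unitary ?spectral_unitarymx //.
rewrite {1}(orthomx_spectralP (herm_normal h)); congr (_ *m diag_mx _ *m _).
apply/rowP => j; rewrite !mxE /spec.
by rewrite RRe_real //; apply: (mxOverP hr).
Qed.

Lemma tcM m n p (A : 'M[C]_(m,n)) (B : 'M[C]_(n,p)) : (A *m B)^t* = B^t* *m A^t*.
Proof. by rewrite trmx_mul map_mxM. Qed.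

Lemma herm_of_decomp n (W : 'M[C]_n) g : adj (W^t* *m dmx g *m W) = W^t* *m dmx g *m W.
Proof. by rewrite adj_adjE !tcM trmxCK dmx_adj mulmxA. Qed.

Lemma mxfunE n f (A : 'M[C]_n) :
  mxfun f A = (spectralmx A)^t* *m dmx (fun i => f (spec A i)) *m spectralmx A.
Proof.
rewrite /mxfun invmx_unitary ?spectral_unitarymx //; congr (_ *m diag_mx _ *m _).
by apply/rowP => j; rewrite !mxE.
Qed.

Lemma dmx_comm n (X : 'M[C]_n) (a b : 'I_n -> R) (f : R -> R) :
  X *m dmx a = dmx b *m X ->
  X *m dmx (fun i => f (a i)) = dmx (fun i => f (b i)) *m X.
Proof.
move=> /matrixP h; apply/matrixP => i j; have := h i j.
rewrite !mul_mx_diag !mul_diag_mx !mxE => e.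
have [->|nz] := eqVneq (X i j) 0; first by rewrite mulr0 mul0r.
have : (a j)%:C = (b i)%:C.
  by apply: (mulfI nz); rewrite e mulrC.
by case => ->; rewrite mulrC.
Qed.

Lemma mxfun_uniq n f (A W : 'M[C]_n) (g : 'I_n -> R) :
  W \is unitarymx -> A = W^t* *m dmx g *m W ->
  mxfun f A = W^t* *m dmx (fun i => f (g i)) *m W.
Proof.
move=> Wu eA.
set V := spectralmx A.
have Vu : V \is unitarymx by apply: spectral_unitarymx.
have [VV VV'] := unitaryK Vu; have [WW WW'] := unitaryK Wu.
have hA : adj A = A.
  by rewrite eA herm_of_decomp.
have eV := herm_decomp hA.
set X := W *m V^t*.
have hX : X *m dmx (spec A) = dmx g *m X.
  have -> : X *m dmx (spec A) = W *m A *m V^t*.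
    by rewrite {2}eV /X !mulmxA -(mulmxA _ V) VV mulmx1.
  by rewrite eA /X !mulmxA WW mul1mx.
have := dmx_comm f hX => hf.
rewrite mxfunE -/V.
have -> : V^t* = W^t* *m X by rewrite /X mulmxA WW' mul1mx.
by rewrite -(mulmxA _ X) hf mulmxA -(mulmxA _ X) /X -(mulmxA W) VV' mulmx1.
Qed.

Definition logp (x : R) := if 0 < x then ln x else 0.

Lemma mxlog_mxexp n (A : 'M[C]_n) : adj A = A -> mxlog (mxexp A) = A.
Proof.
move=> hA.
rewrite /mxlog /mxexp (mxfunE (@expR R) A).
rewrite (mxfun_uniq _ (spectral_unitarymx A) (erefl _)).
rewrite [RHS](herm_decomp hA); congr (_ *m dmx _ *m _).
by apply: funext => i; rewrite expR_gt0 expRK.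
Qed.

Lemma dmx_sum n (W : 'M[C]_n) (c : 'I_n -> R) :
  W^t* *m dmx c *m W = \sum_k (c k)%:C *: ((row k W)^t* *m row k W).
Proof.
apply/matrixP => i j; rewrite mul_mx_diag !mxE summxE.
apply: eq_bigr => k _; rewrite !mxE big_ord1 !mxE.
by rewrite [RHS]mulrA [(c k)%:C * _]mulrC.
Qed.

Definition sqn (z : C) : R := complex.Re z ^+ 2 + complex.Im z ^+ 2.

Lemma sqnE (z : C) : z * z^* = (sqn z)%:C.
Proof. by case: z => a b; rewrite /sqn /=; apply/eqP; rewrite eq_complex /=; apply/andP; split; apply/eqP; ring. Qed.

Lemma sqn_ge0 (z : C) : 0 <= sqn z.
Proof. by rewrite /sqn addr_ge0 // sqr_ge0. Qed.

Definition fm n (u : 'rV[C]_n) (A : 'M[C]_n) (v : 'rV[C]_n) : C := (u *m A *m v^t*) 0 0.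

Lemma fm_dmx n (y : 'rV[C]_n) g : fm y (dmx g) y = (\sum_i g i * sqn (y 0 i))%:C.
Proof.
rewrite /fm mul_mx_diag !mxE rmorph_sum; apply: eq_bigr => i _.
by rewrite !mxE -mulrA [_ * (y 0 i)^*]mulrC mulrA sqnE rmorphM mulrC.
Qed.

Lemma fm_decomp n (u : 'rV[C]_n) (W : 'M[C]_n) g :
  fm u (W^t* *m dmx g *m W) u = (\sum_i g i * sqn ((u *m W^t*) 0 i))%:C.
Proof.
rewrite -fm_dmx /fm tcM trmxCK !mulmxA.
by [].
Qed.

Lemma tcD m n (x y : 'M[C]_(m,n)) : (x + y)^t* = x^t* + y^t*.
Proof. by apply/matrixP => i j; rewrite !mxE rmorphD. Qed.
Lemma tcN m n (x : 'M[C]_(m,n)) : (- x)^t* = - x^t*.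
Proof. by apply/matrixP => i j; rewrite !mxE rmorphN. Qed.
Lemma tcZ m n (c : C) (x : 'M[C]_(m,n)) : (c *: x)^t* = c^* *: x^t*.
Proof. by apply/matrixP => i j; rewrite !mxE rmorphM. Qed.

Lemma fmD1 n (x y v : 'rV[C]_n) A : fm (x + y) A v = fm x A v + fm y A v.
Proof. by rewrite /fm !mulmxDl mxE. Qed.
Lemma fmN1 n (x v : 'rV[C]_n) A : fm (- x) A v = - fm x A v.
Proof. by rewrite /fm !mulNmx mxE. Qed.
Lemma fmZ1 n c (x v : 'rV[C]_n) A : fm (c *: x) A v = c * fm x A v.
Proof. by rewrite /fm -!scalemxAl mxE. Qed.
Lemma fmD2 n (x y u : 'rV[C]_n) A : fm u A (x + y) = fm u A x + fm u A y.
Proof. by rewrite /fm tcD mulmxDr mxE. Qed.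
Lemma fmN2 n (x u : 'rV[C]_n) A : fm u A (- x) = - fm u A x.
Proof. by rewrite /fm tcN mulmxN mxE. Qed.
Lemma fmZ2 n c (x u : 'rV[C]_n) A : fm u A (c *: x) = c^* * fm u A x.
Proof. by rewrite /fm tcZ -scalemxAr mxE. Qed.
Lemma fm_sum n (u v : 'rV[C]_n) (F : 'I_n -> 'M[C]_n) :
  fm u (\sum_k F k) v = \sum_k fm u (F k) v.
Proof. by rewrite /fm mulmx_sumr mulmx_suml summxE. Qed.
Lemma fmZm n (u v : 'rV[C]_n) c A : fm u (c *: A) v = c * fm u A v.
Proof. by rewrite /fm -scalemxAr -scalemxAl mxE. Qed.
Lemma fmDm n (u v : 'rV[C]_n) A B : fm u (A + B) v = fm u A v + fm u B v.
Proof. by rewrite /fm mulmxDr mulmxDl mxE. Qed.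
Lemma fmNm n (u v : 'rV[C]_n) A : fm u (- A) v = - fm u A v.
Proof. by rewrite /fm mulmxN mulNmx mxE. Qed.

Lemma choi n (x : 'rV[C]_n) (Q : 'I_n -> 'M[C]_n) (mu : 'I_n -> R) (G : 'M[C]_n) :
  (forall k, 0 < mu k) -> (forall k u, 0 <= fm u (Q k) u) -> G^t* = G ->
  G *m (\sum_k (mu k)%:C *: Q k) = 1%:M -> \sum_k Q k = 1%:M ->
  fm x G x <= \sum_k ((mu k)^-1)%:C * fm x (Q k) x.
Proof.
move=> mup Qp hG hGN hQ.
set y := x *m G.
have e : forall k, ((mu k)^-1)%:C * fm (x - (mu k)%:C *: y) (Q k) (x - (mu k)%:C *: y) =
   ((mu k)^-1)%:C * fm x (Q k) x - fm y (Q k) x - fm x (Q k) y + (mu k)%:C * fm y (Q k) y.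
  move=> k.
  rewrite fmD1 fmN1 !fmD2 !fmN2 !fmZ1 !fmZ2 conjCr fmorphV.
  have nz : (mu k)%:C != 0 by rewrite fmorph_eq0 gt_eqF.
  by field.
have s0 : 0 <= \sum_k ((mu k)^-1)%:C * fm (x - (mu k)%:C *: y) (Q k) (x - (mu k)%:C *: y).
  apply: sumr_ge0 => k _; apply: mulr_ge0 => //.
  by rewrite -(rmorph0 (real_complex R)) lec_real invr_ge0 ltW.
move: s0; under eq_bigr do rewrite e.
rewrite !big_split /= !sumrN.
rewrite -(fm_sum y x Q) -(fm_sum x y Q) hQ.
have -> : \sum_i (mu i)%:C * fm y (Q i) y = fm y (\sum_k (mu k)%:C *: Q k) y.
  by rewrite fm_sum; apply: eq_bigr => k _; rewrite fmZm.
have e1 : fm y 1%:M x = fm x G x by rewrite /fm mulmx1.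
have e2 : fm x 1%:M y = fm x G x by rewrite /fm mulmx1 /y tcM hG mulmxA.
have e3 : fm y (\sum_k (mu k)%:C *: Q k) y = fm x G x.
  by rewrite /fm /y tcM hG -(mulmxA x G) hGN mulmx1 mulmxA.
rewrite e1 e2 e3 -subr_ge0.
set S := \sum_k _.
have -> : S - fm x G x - fm x G x + fm x G x = S - fm x G x by ring.
by rewrite ?subr0 subr_ge0.
Qed.

Section Lin.
Variable n : nat.
Variable Psi : 'M[C]_n -> 'M[C]_n.
Hypothesis hlin : forall (c : C) X Y, Psi (c *: X + Y) = c *: Psi X + Psi Y.

Lemma lin0 : Psi 0 = 0.
Proof.
have h := hlin 1 0 0; rewrite scaler0 addr0 scale1r in h.
by apply: (addrI (Psi 0)); rewrite addr0 -h.
Qed.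
Lemma linZ c X : Psi (c *: X) = c *: Psi X.
Proof. by have := hlin c X 0; rewrite !addr0 lin0 addr0. Qed.
Lemma linD X Y : Psi (X + Y) = Psi X + Psi Y.
Proof. by have := hlin 1 X Y; rewrite !scale1r. Qed.
Lemma linN X : Psi (- X) = - Psi X.
Proof. by rewrite -scaleN1r linZ scaleN1r. Qed.
Lemma linB X Y : Psi (X - Y) = Psi X - Psi Y.
Proof. by rewrite linD linN. Qed.
Lemma lin_sum (F : 'I_n -> 'M[C]_n) : Psi (\sum_k F k) = \sum_k Psi (F k).
Proof.
elim/big_rec2: _ => [|k y1 y2 _ <-]; first exact: lin0.
exact: linD.
Qed.
End Lin.

Lemma pos_comb (K : finType) (l q : K -> R) :
  (forall k, 0 < l k) -> (forall k, 0 <= q k) -> \sum_k q k = 1 ->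
  0 < \sum_k l k * q k.
Proof.
move=> lp qp s1; rewrite lt_neqAle sumr_ge0 ?andbT; last first.
  by move=> k _; rewrite mulr_ge0 // ltW.
apply/negP => /eqP /esym /eqP; rewrite psumr_eq0; last first.
  by move=> k _; rewrite mulr_ge0 // ltW.
move=> /allP h.
have : \sum_k q k = 0.
  apply: big1 => k _; have := h k (mem_index_enum k).
  by rewrite mulf_eq0 gt_eqF //= => /eqP.
by rewrite s1 => /eqP; rewrite oner_eq0.
Qed.

Lemma fm_row_decomp n (V : 'M[C]_n) g i : V \is unitarymx ->
  fm (row i V) (V^t* *m dmx g *m V) (row i V) = (g i)%:C.
Proof.
move=> Vu; have [VV _] := unitaryK Vu.
rewrite fm_decomp -row_mul VV.
rewrite (bigD1 i) //= big1 ?addr0.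
  by rewrite !mxE eqxx /sqn /= expr1n expr0n /= addr0 mulr1.
move=> j ji; rewrite !mxE eq_sym (negbTE ji) /sqn /= expr0n /= addr0 mulr0 //.
Qed.

Lemma fm_real n (u : 'rV[C]_n) A : 0 <= fm u A u -> fm u A u = (complex.Re (fm u A u))%:C.
Proof. by case/ge0_real. Qed.

Lemma realC_inj : injective (real_complex R).
Proof. exact: fmorph_inj. Qed.

Lemma psi_exp_pos n (Psi : 'M[C]_n -> 'M[C]_n) (A : 'M[C]_n) :
  (forall (c : C) X Y, Psi (c *: X + Y) = c *: Psi X + Psi Y) ->
  Psi 1%:M = 1%:M ->
  (forall Y, adj Y = Y -> adj (Psi Y) = Psi Y) ->
  (forall (x u : 'rV[C]_n), 0 <= fm u (Psi (x^t* *m x)) u) ->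
  adj A = A ->
  forall i, 0 < spec (Psi (mxexp A)) i.
Proof.
move=> hlin h1 hherm hpos hA.
set W := spectralmx A; set a := spec A.
have Wu : W \is unitarymx by apply: spectral_unitarymx.
pose P k := (row k W)^t* *m row k W.
pose Q k := Psi (P k).
have Qp : forall k u, 0 <= fm u (Q k) u by move=> k u; apply: hpos.
have eA : A = \sum_k (a k)%:C *: P k by rewrite -dmx_sum; apply: herm_decomp.
have eE : mxexp A = \sum_k (expR (a k))%:C *: P k by rewrite -dmx_sum /mxexp mxfunE.
have e1 : 1%:M = \sum_k P k.
  have [_ WW] := unitaryK Wu.
  rewrite -WW -(mulmx1 (W^t*)) -(dmx1 n) dmx_sum.
  by apply: eq_bigr => k _; rewrite scale1r.
have sQ : \sum_k Q k = 1%:M by rewrite -(lin_sum hlin) -e1.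
set M := Psi (mxexp A).
have eM : M = \sum_k (expR (a k))%:C *: Q k.
  by rewrite /M eE (lin_sum hlin); apply: eq_bigr => k _; rewrite (linZ hlin).
have ePA : Psi A = \sum_k (a k)%:C *: Q k.
  by rewrite {1}eA (lin_sum hlin); apply: eq_bigr => k _; rewrite (linZ hlin).
have hM : adj M = M.
  by apply: hherm; rewrite /mxexp mxfunE herm_of_decomp.
set V := spectralmx M; set m := spec M.
have Vu : V \is unitarymx by apply: spectral_unitarymx.
have dM : M = V^t* *m dmx m *m V by apply: herm_decomp.
have lM : mxlog M = V^t* *m dmx (fun i => logp (m i)) *m V by rewrite /mxlog mxfunE.
move=> i.
  have h := fm_row_decomp m i Vu; rewrite -dM eM fm_sum in h.
  pose q' k := complex.Re (fm (row i V) (Q k) (row i V)).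
  have eq' : forall k, fm (row i V) (Q k) (row i V) = (q' k)%:C.
    by move=> k; rewrite /q' -fm_real.
  have q'0 : forall k, 0 <= q' k by move=> k; have [_ ] := ge0_real (Qp k (row i V)).
  have sq' : \sum_k q' k = 1.
    have [_ VV] := unitaryK Vu.
    have h1' := fm_row_decomp (fun _ : 'I_n => 1) i Vu.
    rewrite dmx1 mulmx1 VV in h1'.
    apply: realC_inj; rewrite rmorph_sum -h1' -sQ fm_sum.
    by apply: eq_bigr => k _; rewrite eq'.
  have : (m i)%:C = (\sum_k expR (a k) * q' k)%:C.
    rewrite -h rmorph_sum; apply: eq_bigr => k _.
    by rewrite fmZm eq' rmorphM.
  move/realC_inj => ->; apply: pos_comb => // k; exact: expR_gt0.
Qed.

Lemma key n (Psi : 'M[C]_n -> 'M[C]_n) (A : 'M[C]_n) :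
  (forall (c : C) X Y, Psi (c *: X + Y) = c *: Psi X + Psi Y) ->
  Psi 1%:M = 1%:M ->
  (forall Y, adj Y = Y -> adj (Psi Y) = Psi Y) ->
  (forall (x u : 'rV[C]_n), 0 <= fm u (Psi (x^t* *m x)) u) ->
  adj A = A ->
  psd (mxlog (Psi (mxexp A)) - Psi A).
Proof.
move=> hlin h1 hherm hpos hA.
set W := spectralmx A; set a := spec A.
have Wu : W \is unitarymx by apply: spectral_unitarymx.
pose P k := (row k W)^t* *m row k W.
pose Q k := Psi (P k).
have Qp : forall k u, 0 <= fm u (Q k) u by move=> k u; apply: hpos.
have eA : A = \sum_k (a k)%:C *: P k by rewrite -dmx_sum; apply: herm_decomp.
have eE : mxexp A = \sum_k (expR (a k))%:C *: P k by rewrite -dmx_sum /mxexp mxfunE.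
have e1 : 1%:M = \sum_k P k.
  have [_ WW] := unitaryK Wu.
  rewrite -WW -(mulmx1 (W^t*)) -(dmx1 n) dmx_sum.
  by apply: eq_bigr => k _; rewrite scale1r.
have sQ : \sum_k Q k = 1%:M by rewrite -(lin_sum hlin) -e1.
set M := Psi (mxexp A).
have eM : M = \sum_k (expR (a k))%:C *: Q k.
  by rewrite /M eE (lin_sum hlin); apply: eq_bigr => k _; rewrite (linZ hlin).
have ePA : Psi A = \sum_k (a k)%:C *: Q k.
  by rewrite {1}eA (lin_sum hlin); apply: eq_bigr => k _; rewrite (linZ hlin).
have hM : adj M = M.
  by apply: hherm; rewrite /mxexp mxfunE herm_of_decomp.
set V := spectralmx M; set m := spec M.
have Vu : V \is unitarymx by apply: spectral_unitarymx.
have dM : M = V^t* *m dmx m *m V by apply: herm_decomp.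
have lM : mxlog M = V^t* *m dmx (fun i => logp (m i)) *m V by rewrite /mxlog mxfunE.
have mpos : forall i, 0 < m i.
  move=> i.
  have h := fm_row_decomp m i Vu; rewrite -dM eM fm_sum in h.
  pose q' k := complex.Re (fm (row i V) (Q k) (row i V)).
  have eq' : forall k, fm (row i V) (Q k) (row i V) = (q' k)%:C.
    by move=> k; rewrite /q' -fm_real.
  have q'0 : forall k, 0 <= q' k by move=> k; have [_ ] := ge0_real (Qp k (row i V)).
  have sq' : \sum_k q' k = 1.
    have [_ VV] := unitaryK Vu.
    have h1' := fm_row_decomp (fun _ : 'I_n => 1) i Vu.
    rewrite dmx1 mulmx1 VV in h1'.
    apply: realC_inj; rewrite rmorph_sum -h1' -sQ fm_sum.
    by apply: eq_bigr => k _; rewrite eq'.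
  have : (m i)%:C = (\sum_k expR (a k) * q' k)%:C.
    rewrite -h rmorph_sum; apply: eq_bigr => k _.
    by rewrite fmZm eq' rmorphM.
  move/realC_inj => ->; apply: pos_comb => // k; exact: expR_gt0.
split.
  by rewrite /is_herm adj_adjE tcD tcN -!adj_adjE (hherm _ hA) lM herm_of_decomp.
move=> v.
change (0 <= fm v (mxlog M - Psi A) v).
rewrite fmDm fmNm lM fm_decomp ePA fm_sum.
pose w i := sqn ((v *m V^t*) 0 i).
pose q k := complex.Re (fm v (Q k) v).
have eq : forall k, fm v (Q k) v = (q k)%:C by move=> k; rewrite /q -fm_real.
have q0 : forall k, 0 <= q k by move=> k; have [_ ] := ge0_real (Qp k v).
have -> : \sum_k fm v ((a k)%:C *: Q k) v = (\sum_k a k * q k)%:C.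
  by rewrite rmorph_sum; apply: eq_bigr => k _; rewrite fmZm eq rmorphM.
rewrite -rmorphB -(rmorph0 (real_complex R)) lec_real subr_ge0.
have -> : \sum_i logp (m i) * sqn ((v *m V^t*) 0 i) = \sum_i w i * ln (m i).
  by apply: eq_bigr => i _; rewrite /logp mpos mulrC.
have -> : \sum_k a k * q k = \sum_k q k * ln (expR (a k)).
  by apply: eq_bigr => k _; rewrite expRK mulrC.
apply: jensen_log => //.
- by move=> i; apply: sqn_ge0.
- by move=> k; apply: expR_gt0.
- apply: realC_inj.
  have [_ VV] := unitaryK Vu.
  have := fm_decomp v V (fun _ => 1); rewrite dmx1 mulmx1 VV.
  have -> : \sum_i 1 * sqn ((v *m V ^t*) 0 i) = \sum_i w i.
    by apply: eq_bigr => i _; rewrite mul1r.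
  move=> <-; rewrite -sQ fm_sum rmorph_sum; apply: eq_bigr => k _.
  exact: eq.
move=> s sI.
have sI' : 0 <= s <= 1 by case/andP: sI => s0 s1; rewrite ltW.
pose mu k := 1 - s + s * expR (a k).
have mup : forall k, 0 < mu k by move=> k; apply: den_gt0 => //; apply: expR_gt0.
pose g i := (1 - s + s * m i)^-1.
set G := V^t* *m dmx g *m V.
have hG : G^t* = G by rewrite -adj_adjE herm_of_decomp.
have hN : \sum_k (mu k)%:C *: Q k = V^t* *m dmx (fun i => 1 - s + s * m i) *m V.
  have -> : \sum_k (mu k)%:C *: Q k = (1 - s)%:C *: 1%:M + s%:C *: M.
    rewrite -sQ eM !scaler_sumr -big_split; apply: eq_bigr => k _ /=.
    by rewrite scalerA -scalerDl /mu -rmorphM -rmorphD.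
  have -> : dmx (fun i => 1 - s + s * m i) = (1 - s)%:C *: 1%:M + s%:C *: dmx m.
    apply/matrixP => i j; rewrite !mxE.
    by case: (i == j); rewrite ?mulr1n ?mulr0n ?mulr0 ?addr0 ?mulr1 // rmorphD rmorphM.
  have [VV VV'] := unitaryK Vu.
  by rewrite mulmxDr mulmxDl -!scalemxAr -!scalemxAl mulmx1 VV' -dM.
have GN : G *m (\sum_k (mu k)%:C *: Q k) = 1%:M.
  have [VV VV'] := unitaryK Vu.
  rewrite hN /G !mulmxA -(mulmxA _ V) VV mulmx1 -(mulmxA _ (dmx g)) dmxM.
  have -> : (fun i => g i * (1 - s + s * m i)) = (fun _ => 1).
    apply: funext => i; rewrite /g mulVf // gt_eqF //.
    by apply: den_gt0 => //.
  by rewrite dmx1 mulmx1 VV'.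
have := choi v mup Qp hG GN sQ.
rewrite /G fm_decomp.
have -> : \sum_k ((mu k)^-1)%:C * fm v (Q k) v = (\sum_k q k / mu k)%:C.
  by rewrite rmorph_sum; apply: eq_bigr => k _; rewrite eq -rmorphM mulrC.
rewrite lec_real => h.
apply: le_trans h; rewrite le_eqVlt; apply/orP; left; apply/eqP.
by apply: eq_bigr => i _; rewrite mulrC.
Qed.

Lemma tr_delta n (A : 'M[C]_n) i j : \tr (delta_mx j i *m A) = A i j.
Proof.
rewrite -(mul_delta_mx (0 : 'I_1)) -mulmxA -rowE mxtrace_mulC trace_mx11 -colE.
by rewrite !mxE.
Qed.

Lemma dual_ext n (A B : 'M[C]_n) : (forall X, \tr (X *m A) = \tr (X *m B)) -> A = B.
Proof. by move=> h; apply/matrixP => i j; rewrite -!tr_delta h. Qed.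

Lemma tr_tc n (M : 'M[C]_n) : \tr (M^t*) = (\tr M)^*%R.
Proof. by rewrite trace_map_mx mxtrace_tr. Qed.

Lemma tr_mul_tc n (X B : 'M[C]_n) : \tr (X *m B^t*) = (\tr (X^t* *m B))^*%R.
Proof. by rewrite -tr_tc tcM trmxCK mxtrace_mulC. Qed.

Lemma fm_tr n (u : 'rV[C]_n) A : fm u A u = \tr ((u^t* *m u) *m A).
Proof. by rewrite /fm -trace_mx11 mxtrace_mulC mulmxA. Qed.

Definition rank1_blocks n k (x : 'I_k -> 'rV[C]_n) := fun a b => (x a)^t* *m x b.

Lemma rank1_block_psd n k (x : 'I_k -> 'rV[C]_n) : block_psd (rank1_blocks x).
Proof.
split.
  by move=> a b; rewrite /rank1_blocks adj_adjE tcM trmxCK.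
move=> y.
have e : forall a b, (y a *m rank1_blocks x a b *m adj (y b)) 0 0 =
   ((y a *m (x a)^t*) 0 0) * ((y b *m (x b)^t*) 0 0)^*%R.
  move=> a b; rewrite /rank1_blocks adj_adjE !mulmxA -(mulmxA _ (x b)).
  rewrite mxE big_ord1; congr (_ * _).
  rewrite -[X in _ = X^*%R]trace_mx11 -tr_tc tcM trmxCK trace_mx11.
  by [].
under eq_bigr do under eq_bigr do rewrite e.
set z := fun a => (y a *m (x a)^t*) 0 0.
have -> : \sum_a \sum_b z a * (z b)^*%R = (\sum_a z a) * (\sum_a z a)^*%R.
  by rewrite rmorph_sum mulr_suml; apply: eq_bigr => a _; rewrite mulr_sumr.
have sq : forall w : C, w * w^*%R = (sqn w)%:C by move=> w; exact: sqnE.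
by rewrite sq -(rmorph0 (real_complex R)) lec_real sqn_ge0.
Qed.

Lemma tc_sum m p (I : finType) (F : I -> 'M[C]_(m,p)) : (\sum_i F i)^t* = \sum_i (F i)^t*.
Proof.
apply/matrixP => i j; rewrite !mxE summxE rmorph_sum summxE.
by apply: eq_bigr => k _; rewrite !mxE.
Qed.

Lemma tc_delta m p (i : 'I_m) (j : 'I_p) : (delta_mx i j : 'M[C]_(m,p))^t* = delta_mx j i.
Proof.
apply/matrixP => a b; rewrite !mxE andbC.
by case: (_ && _); rewrite /= ?conjC1 ?conjC0.
Qed.

Lemma tc_delta_row n (i : 'I_n) : (delta_mx 0 i : 'rV[C]_n)^t* = delta_mx i 0.
Proof. exact: tc_delta. Qed.

Section Chan.
Variable n : nat.
Variable Phi : {linear 'M[C]_n -> 'M[C]_n}.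
Variable Phid : 'M[C]_n -> 'M[C]_n.
Hypothesis hCP : completely_positive Phi.
Hypothesis hTP : trace_preserving Phi.
Hypothesis hdual : trace_dual Phi Phid.

Lemma Phid_lin c X Y : Phid (c *: X + Y) = c *: Phid X + Phid Y.
Proof.
apply: dual_ext => Z.
rewrite -hdual mulmxDr -scalemxAr mxtraceD mxtraceZ !hdual.
by rewrite mulmxDr -scalemxAr mxtraceD mxtraceZ.
Qed.

Lemma Phid1 : Phid 1%:M = 1%:M.
Proof. by apply: dual_ext => X; rewrite -hdual !mulmx1 hTP. Qed.

Lemma Phi_herm_rank1 (v w : 'rV[C]_n) : adj (Phi (v^t* *m w)) = Phi (w^t* *m v).
Proof.
pose x : 'I_2 -> 'rV[C]_n := fun a => if a == 0 then v else w.
have [h _] := hCP (rank1_block_psd x).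
by have := h 0 1; rewrite /rank1_blocks /x /=.
Qed.

Lemma Phi_tc X : Phi (X^t*) = (Phi X)^t*.
Proof.
have eX : X^t* = \sum_i \sum_j (X i j)^*%R *: delta_mx j i.
  rewrite {1}(matrix_sum_delta X) tc_sum; apply: eq_bigr => i _.
  rewrite tc_sum; apply: eq_bigr => j _; by rewrite tcZ tc_delta.
have e1 : Phi (X^t*) = \sum_i \sum_j (X i j)^*%R *: Phi (delta_mx j i).
  rewrite eX linear_sum; apply: eq_bigr => i _.
  by rewrite linear_sum; apply: eq_bigr => j _; rewrite linearZ.
have e2 : Phi X = \sum_i \sum_j X i j *: Phi (delta_mx i j).
  rewrite [in LHS](matrix_sum_delta X) linear_sum; apply: eq_bigr => i _.
  by rewrite linear_sum; apply: eq_bigr => j _; rewrite linearZ.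
rewrite e1 e2 tc_sum; apply: eq_bigr => i _.
rewrite tc_sum; apply: eq_bigr => j _.
rewrite tcZ; congr (_ *: _).
have e : forall a b : 'I_n, (delta_mx a b : 'M[C]_n) = (delta_mx 0 a : 'rV[C]_n)^t* *m delta_mx 0 b.
  by move=> a b; rewrite tc_delta_row mul_delta_mx.
by rewrite !e; symmetry; exact: Phi_herm_rank1.
Qed.

Lemma Phid_herm Y : adj Y = Y -> adj (Phid Y) = Phid Y.
Proof.
rewrite !adj_adjE => hY; apply: dual_ext => X.
rewrite tr_mul_tc -(hdual (X^t*) Y) Phi_tc -(hdual X Y).
by rewrite -[in RHS]hY tr_mul_tc.
Qed.

Lemma Phid_pos (x u : 'rV[C]_n) : 0 <= fm u (Phid (x^t* *m x)) u.
Proof.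
rewrite fm_tr -hdual mulmxA mxtrace_mulC mulmxA trace_mx11.
have [_ h] := hCP (rank1_block_psd (fun _ : 'I_1 => u)).
by have := h (fun _ => x); rewrite !big_ord1 /rank1_blocks.
Qed.

End Chan.
Lemma decomp_unit n (V : 'M[C]_n) g : V \is unitarymx -> (forall i, g i != 0) ->
  V^t* *m dmx g *m V \in unitmx.
Proof.
move=> Vu gnz; have [VV VV'] := unitaryK Vu.
apply: (proj1 (@mulmx1_unit _ _ _ (V^t* *m dmx (fun i => (g i)^-1) *m V) _)).
rewrite !mulmxA -(mulmxA _ V) VV mulmx1 -(mulmxA _ (dmx g)) dmxM.
have -> : (fun i => g i * (g i)^-1) = (fun _ => 1).
  by apply: funext => i; rewrite mulfV.
by rewrite dmx1 mulmx1 VV'.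
Qed.

Lemma supp_sub_unit n (X Y : 'M[C]_n) : Y \in unitmx -> supp_sub X Y.
Proof. by move=> hY; rewrite /supp_sub submx_full // row_full_unit unitmx_tr. Qed.

Lemma mxexp_unit n (A : 'M[C]_n) : mxexp A \in unitmx.
Proof.
rewrite /mxexp mxfunE; apply: decomp_unit; first exact: spectral_unitarymx.
by move=> i; rewrite gt_eqF // expR_gt0.
Qed.

Lemma herm_unit n (M : 'M[C]_n) : adj M = M -> (forall i, 0 < spec M i) -> M \in unitmx.
Proof.
move=> hM hp; rewrite (herm_decomp hM); apply: decomp_unit; first exact: spectral_unitarymx.
by move=> i; rewrite gt_eqF.
Qed.

Lemma tr_psd n (A B : 'M[C]_n) : psd A -> psd B -> 0 <= complex.Re (\tr (A *m B)).
Proof.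
move=> [hA pA] [hB pB].
set W := spectralmx A.
have Wu : W \is unitarymx by apply: spectral_unitarymx.
have dA := herm_decomp hA; rewrite -/W in dA.
suff : 0 <= \tr (A *m B) by case/ge0_real.
rewrite dA -!mulmxA mxtrace_mulC -!mulmxA.
rewrite /mxtrace; apply: sumr_ge0 => i _.
rewrite mul_diag_mx !mxE.
have r0 : 0 <= (spec A i)%:C.
  by rewrite -(fm_row_decomp (spec A) i Wu) -dA; apply: pA.
apply: mulr_ge0 => //.
have -> : \sum_j W i j * (B *m W^t*) j i = (W *m B *m W^t*) i i.
  by rewrite -mulmxA mxE.
have -> : (W *m B *m W^t*) i i = fm (row i W) B (row i W).
  rewrite /fm -row_mul !mxE; apply: eq_bigr => k _; by rewrite !mxE.
exact: pB.
Qed.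
Lemma trB n (X Y : 'M[C]_n) : \tr (X - Y) = \tr X - \tr Y.
Proof. by rewrite /mxtrace -sumrB; apply: eq_bigr => i _; rewrite !mxE. Qed.

Lemma tc_scalar n (z : C) : ((z%:M : 'M[C]_n))^t* = (z^*%R)%:M.
Proof.
apply/matrixP => i j; rewrite !mxE eq_sym.
by case: (i == j); rewrite ?mulr1n ?mulr0n ?conjC0.
Qed.

Lemma herm_gibbs_arg n (b f : R) (H : 'M[C]_n) : adj H = H ->
  adj (b%:C *: ((f%:C)%:M - H)) = b%:C *: ((f%:C)%:M - H).
Proof.
rewrite !adj_adjE => hH.
by rewrite tcZ tcD tcN hH tc_scalar !conjCr.
Qed.

Lemma tr_gibbs_arg n (X : 'M[C]_n) (b f : R) (H : 'M[C]_n) :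
  complex.Re (\tr (X *m (b%:C *: ((f%:C)%:M - H)))) =
  b * (f * complex.Re (\tr X) - complex.Re (\tr (X *m H))).
Proof.
rewrite -scalemxAr mxtraceZ ReMr mulmxBr trB ReB mul_mx_scalar mxtraceZ ReMr.
by [].
Qed.
End S.

Lemma final_step (R : realType) (b DE DF X0 XM T a lM h0 hP F0 Ft t tP : R) :
  DE = hP - h0 -> DF = Ft - F0 ->
  X0 = a - b * (F0 * t - h0) -> XM = a - lM -> T = lM - b * (Ft * tP - hP) ->
  tP = t -> t = 1 -> 0 <= T ->
  ((b * (DE - DF))%:E + (X0 / t)%:E = (XM / t)%:E + T%:E)%E /\
  ((XM / t)%:E <= (XM / t)%:E + T%:E)%E.
Proof.
move=> -> -> -> -> -> -> -> hT; rewrite !divr1; split.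
  by rewrite -!EFinD; congr (_%:E); ring.
by rewrite -EFinD lee_fin lerDl.
Qed.

Local Close Scope sesquilinear_scope.

Theorem mainTheorem1 (R : realType) (n : nat)
  (rho0 : 'M[R[i]]_n) (Phi : {linear 'M[R[i]]_n -> 'M[R[i]]_n})
  (Phid : 'M[R[i]]_n -> 'M[R[i]]_n) (H0 Htau : 'M[R[i]]_n) (beta : R) :
  density rho0 ->
  completely_positive Phi -> trace_preserving Phi ->
  trace_dual Phi Phid ->
  is_herm H0 -> is_herm Htau -> 0 < beta ->
  let F0 := free_energy beta H0 in
  let Ftau := free_energy beta Htau in
  let Gamma0 := gibbs beta H0 in
  let Gammatau := gibbs beta Htau in
  let DeltaF := Ftau - F0 in
  let DeltaE := complex.Re (\tr (Phi rho0 *m Htau)) - complex.Re (\tr (rho0 *m H0)) in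
  let L := mxlog (Phid Gammatau) - Phid (mxlog Gammatau) in
  psd L /\
  ((beta * (DeltaE - DeltaF))%:E + relent rho0 Gamma0
     = relent rho0 (Phid Gammatau) + (complex.Re (\tr (rho0 *m L)))%:E)%E /\
  (relent rho0 (Phid Gammatau) + (complex.Re (\tr (rho0 *m L)))%:E
     >= relent rho0 (Phid Gammatau))%E.
Proof.
move=> [hpsd htr] hCP hTP hdual hH0 hHt hb F0 Ftau Gamma0 Gammatau DeltaF DeltaE L.
pose A0 := beta%:C *: ((F0%:C)%:M - H0).
pose At := beta%:C *: ((Ftau%:C)%:M - Htau).
have hA0 : adj A0 = A0 by apply: herm_gibbs_arg.
have hAt : adj At = At by apply: herm_gibbs_arg.
have eG0 : Gamma0 = mxexp A0 by rewrite /Gamma0 /gibbs.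
have eGt : Gammatau = mxexp At by rewrite /Gammatau /gibbs.
have lG0 : mxlog Gamma0 = A0 by rewrite eG0 mxlog_mxexp.
have lGt : mxlog Gammatau = At by rewrite eGt mxlog_mxexp.
have hlin := Phid_lin hdual.
have h1 := Phid1 hTP hdual.
have hherm := Phid_herm hCP hdual.
have hpos := Phid_pos hCP hdual.
have psdL : psd L by rewrite /L lGt eGt; apply: key.
have hGt : adj Gammatau = Gammatau by rewrite eGt /mxexp mxfunE herm_of_decomp.
have Munit : Phid Gammatau \in unitmx.
  apply: herm_unit; first exact: hherm.
  by rewrite eGt; apply: psi_exp_pos.
have s0 : supp_sub rho0 Gamma0 by apply: supp_sub_unit; rewrite eG0 mxexp_unit.
have sM : supp_sub rho0 (Phid Gammatau) by apply: supp_sub_unit.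
split; first exact: psdL.
rewrite /relent s0 sM.
have ht : complex.Re (\tr rho0) = 1 by rewrite htr.
have htP : complex.Re (\tr (Phi rho0)) = complex.Re (\tr rho0) by rewrite hTP.
have f0 : complex.Re (\tr (rho0 *m mxlog rho0 - rho0 *m mxlog Gamma0)) =
    complex.Re (\tr (rho0 *m mxlog rho0)) -
    beta * (F0 * complex.Re (\tr rho0) - complex.Re (\tr (rho0 *m H0))).
  by rewrite trB ReB lG0 tr_gibbs_arg.
have fM : complex.Re (\tr (rho0 *m mxlog rho0 - rho0 *m mxlog (Phid Gammatau))) =
    complex.Re (\tr (rho0 *m mxlog rho0)) -
    complex.Re (\tr (rho0 *m mxlog (Phid Gammatau))).
  by rewrite trB ReB.
have fT : complex.Re (\tr (rho0 *m L)) =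
    complex.Re (\tr (rho0 *m mxlog (Phid Gammatau))) -
    beta * (Ftau * complex.Re (\tr (Phi rho0)) - complex.Re (\tr (Phi rho0 *m Htau))).
  by rewrite /L mulmxBr trB ReB lGt -hdual tr_gibbs_arg.
have tL := tr_psd hpsd psdL.
have hDE : DeltaE = complex.Re (\tr (Phi rho0 *m Htau)) - complex.Re (\tr (rho0 *m H0)) by [].
have hDF : DeltaF = Ftau - F0 by [].
exact: (final_step hDE hDF f0 fM fT htP ht tL).
Qed.
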